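(* Let $r$ be a positive integer, let $G_r=(V,E)$ be the Chimera graph, and let $c_{uv}\in\mathbb{R}$ for $(u,v)\in E$ and $d_u\in\mathbb{R}$ for $u\in V$ be arbitrary. Let $H^*=\min_{S\in\{-1,1\}^V}\left(\sum_{(u,v)\in E}c_{uv}S_uS_v+\sum_{u\in V}d_uS_u\right)$. Then $$H^*\le -\frac{C}{3C+4}\left[\sum_{(u,v)\in E}|c_{uv}|+\sum_{u\in V}|d_u|\right]$$ for some constant $C>\frac{\ln(1+\sqrt{2})}{\pi}$ (independent of $r$ and of the coefficients). In particular, the approximation factor $(3C+4)/C$ satisfies $(3C+4)/C<17.26$.
   Context: The Chimera graph $G_r=(V,E)$: $V=\{(i,j,k,l)\in\mathbb{Z}^4: 1\le i,j\le r,\ 1\le k\le 4,\ l\in\{0,1\}\}$. $E=E_0\cup E_1\cup E_{01}$ (disjoint), where $E_0$ consists of the edges $\{(i,j,k,0),(i+1,j,k,0)\}$ for $1\le i\le r-1$, $1\le j\le r$, $1\le k\le 4$; $E_1$ consists of the edges $\{(i,j,k,1),(i,j+1,k,1)\}$ for $1\le i\le r$, $1\le j\le r-1$, $1\le k\le 4$; and $E_{01}$ consists of the edges $\{(i,j,k_0,0),(i,j,k_1,1)\}$ for $1\le i,j\le r$, $1\le k_0,k_1\le 4$. *)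

(* Defs.v *)
From Stdlib Require Import Reals.
From mathcomp Require Import all_boot all_order all_algebra.
From mathcomp Require Import Rstruct.
Set Implicit Arguments. Unset Strict Implicit. Unset Printing Implicit Defensive.
Import Order.TTheory GRing.Theory Num.Theory.

(* Vertices of the Chimera graph G_r: ((i, j, k), l) with i, j : 'I_r,
   k : 'I_4 (0-indexed versions of 1..r, 1..r, 1..4), l : bool
   (false = 0, true = 1). *)
Definition cvert (r : nat) : finType := ('I_r * 'I_r * 'I_4 * bool)%type.

Definition cv_i r (u : cvert r) : nat := u.1.1.1.
Definition cv_j r (u : cvert r) : nat := u.1.1.2.
Definition cv_k r (u : cvert r) : nat := u.1.2.
Definition cv_l r (u : cvert r) : bool := u.2.

(* Oriented edge relation: each undirected edge of E = E0 ∪ E1 ∪ E01 is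
   listed exactly once, as the ordered pair (u, v) below. *)
Definition chimera_edge r (u v : cvert r) : bool :=
  [|| [&& ~~ cv_l u, ~~ cv_l v, cv_i v == (cv_i u).+1,
          cv_j v == cv_j u & cv_k v == cv_k u]
    , [&& cv_l u, cv_l v, cv_i v == cv_i u,
          cv_j v == (cv_j u).+1 & cv_k v == cv_k u]
    | [&& ~~ cv_l u, cv_l v, cv_i v == cv_i u & cv_j v == cv_j u] ].

Local Open Scope ring_scope.

Definition spin (b : bool) : R := if b then 1 else -1.

Definition energy r (c : cvert r -> cvert r -> R) (d : cvert r -> R)
  (S : {ffun cvert r -> bool}) : R :=
  \sum_(e : cvert r * cvert r | chimera_edge e.1 e.2)
      c e.1 e.2 * spin (S e.1) * spin (S e.2)
  + \sum_(u : cvert r) d u * spin (S u).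

Definition Hstar r (c : cvert r -> cvert r -> R) (d : cvert r -> R) : R :=
  \big[Order.min/energy c d [ffun _ => true]]_(S : {ffun cvert r -> bool})
     energy c d S.

Definition coef_l1 r (c : cvert r -> cvert r -> R) (d : cvert r -> R) : R :=
  \sum_(e : cvert r * cvert r | chimera_edge e.1 e.2) `|c e.1 e.2|
  + \sum_(u : cvert r) `|d u|.

(* Main.v *)
Require Import Defs.
From Stdlib Require Import Reals.
From mathcomp Require Import all_boot all_order all_algebra.
From mathcomp Require Import Rstruct.
Import Order.TTheory GRing.Theory Num.Theory.
From Stdlib Require Import Lra.

Section Numeric.
Local Open Scope R_scope.
Lemma pi_gt : 3.14 < PI.
Proof.
  pose proof PI2_3_2 as H.
  assert (Hc := COS (3/2)). 
  assert (Hs := sin_lt_x (PI/2 - 3/2)).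
  rewrite sin_shift in Hs.
  assert (cos_lb (3/2) = 1 - (3/2)^2/2 + (3/2)^4/24 - (3/2)^6/720).
  { unfold cos_lb, cos_approx, cos_term. simpl sum_f_R0.
    simpl. lra. }
  assert (Hp : -PI/2 <= 3/2 <= PI/2) by lra.
  destruct Hp as [Hp1 Hp2]; specialize (Hc Hp1 Hp2). specialize (Hs ltac:(lra)). lra.
Qed.
Lemma sqrt2_lt : sqrt 2 < 1.41422.
Proof.
  rewrite <- (sqrt_square 1.41422) by lra.
  apply sqrt_lt_1; lra.
Qed.
Lemma exp_dbl x : exp (2*x) = exp x * exp x.
Proof. replace (2*x) with (x+x) by ring. apply exp_plus. Qed.
Lemma sq_ge (a q : R) : 0 <= q -> q <= a -> q*q <= a*a.
Proof. intros; nra. Qed.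
Lemma exp_lb : 2.4195 < exp (2*PI/7).
Proof.
  pose proof pi_gt.
  set (y := 2*PI/7/32).
  assert (H1 : 1.02803 <= exp y).
  { pose proof (exp_ineq1_le y). unfold y in *. lra. }
  assert (H2 : 1.0568 <= exp (2*y)) by (rewrite exp_dbl; pose proof (sq_ge 1.02803 (exp y)); nra).
  assert (H3 : 1.1168 <= exp (2*(2*y))) by (rewrite exp_dbl; pose proof (sq_ge 1.0568 (exp (2*y))); nra).
  assert (H4 : 1.2472 <= exp (2*(2*(2*y)))) by (rewrite exp_dbl; pose proof (sq_ge 1.1168 (exp (2*(2*y)))); nra).
  assert (H5 : 1.5555 <= exp (2*(2*(2*(2*y))))) by (rewrite exp_dbl; pose proof (sq_ge 1.2472 (exp (2*(2*(2*y))))); nra).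
  assert (H6 : 2.4195 < exp (2*(2*(2*(2*(2*y)))))) by (rewrite exp_dbl; pose proof (sq_ge 1.5555 (exp (2*(2*(2*(2*y)))))); nra).
  replace (2*PI/7) with (2*(2*(2*(2*(2*y))))) by (unfold y; field). exact H6.
Qed.
Lemma num_main : ln (1 + sqrt 2) < 2 * PI / 7.
Proof.
  pose proof sqrt2_lt. pose proof exp_lb. pose proof (sqrt_pos 2).
  rewrite <- (ln_exp (2*PI/7)). apply ln_increasing; lra.
Qed.

Lemma num_main' : ln (1 + sqrt (INR 2)) < INR 2 / INR 7 * PI.
Proof.
  pose proof num_main. replace (INR 2) with 2 by (simpl; lra). replace (INR 7) with 7 by (simpl; lra). lra.
Qed.
End Numeric.

From mathcomp Require Import ring lra zify.

Local Open Scope ring_scope.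

Lemma conv_nat n : (n%:R : R) = INR n.
Proof. by rewrite INRE. Qed.

Lemma num_mc : ln (1 + sqrt 2) / PI < 2 / 7.
Proof.
have hp : (0 : R) < PI by apply/RltP; exact: PI_RGT_0.
rewrite ltr_pdivrMr //; apply/RltP; rewrite !conv_nat; exact: num_main'.
Qed.

Lemma combine (F : realFieldType) (H A B : F) :
  8 * H <= - B -> H <= B - A -> H <= - ((2/7)/(3*(2/7)+4)) * (B + A).
Proof.
move=> h1 h2.
have h : 3*(2/7)+4 = (34/7:F) by lra.
rewrite h invf_div. lra.
Qed.

Lemma const_ok (F : realFieldType) : (3 * (2/7) + 4) / (2/7:F) < 1726%:R / 100%:R.
Proof.
have h : 3*(2/7)+4 = (34/7:F) by lra.
rewrite h invf_div. lra.
Qed.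

Lemma rearr (F : comNzRingType) (c a t1 b t2 : F) : c*(a*t1)*(b*t2) = c*t1*t2*(a*b).
Proof. ring. Qed.

Lemma spin_eq a b : spin (a == b) = spin a * spin b.
Proof. by case: a; case: b; rewrite /spin ?mulr1 ?mul1r ?mulrN1 ?opprK. Qed.

Lemma spin_sq a : spin a * spin a = 1.
Proof. by case: a; rewrite /spin ?mulr1 ?mulrNN ?mulr1. Qed.

Lemma spin_neg b : spin (~~ b) = - spin b.
Proof. by case: b; rewrite /spin ?opprK. Qed.

Lemma sum_invol (I : finType) (F : I -> R) (g : I -> I) :
  involutive g -> (forall x, F (g x) = - F x) -> \sum_x F x = 0.
Proof.
move=> gK hF.
have h : \sum_x F x = - \sum_x F x.
  rewrite {1}(reindex_inj (can_inj gK)) /= -sumrN.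
  by apply: eq_bigr => x _; rewrite hF.
have h2 : (\sum_x F x) *+ 2 = 0 by rewrite mulr2n {1}h addNr.
by move/eqP: h2; rewrite mulrn_eq0 /= => /eqP.
Qed.

Section Comb.
Variable r : nat.
Notation V := (cvert r).

Definition flip (a : V) (x : {ffun V -> bool}) : {ffun V -> bool} :=
  [ffun z => if z == a then ~~ x z else x z].

Lemma flipK a : involutive (flip a).
Proof.
move=> x; apply/ffunP => z; rewrite !ffunE.
by case: (z == a) => //=; rewrite negbK.
Qed.

Lemma sum_spin1 (a : V) : \sum_(x : {ffun V -> bool}) spin (x a) = 0.
Proof.
have := @sum_invol _ (fun x : {ffun V -> bool} => spin (x a)) (flip a) (flipK a).
apply => x /=.
by rewrite ffunE eqxx spin_neg.
Qed.

Lemma sum_spin2 (a b : V) : a != b ->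
  \sum_(x : {ffun V -> bool}) spin (x a) * spin (x b) = 0.
Proof.
move=> ab; have := @sum_invol _ (fun x : {ffun V -> bool} => spin (x a) * spin (x b)) (flip a) (flipK a).
apply => x /=.
by rewrite !ffunE eqxx eq_sym (negbTE ab) spin_neg mulNr.
Qed.

Lemma avg (c : V -> V -> R) (d : V -> R) (comp : V -> V) (tau : V -> bool) :
  Hstar c d <= \sum_(e : V * V | chimera_edge e.1 e.2 && (comp e.1 == comp e.2))
                 c e.1 e.2 * spin (tau e.1) * spin (tau e.2).
Proof.
pose S (x : {ffun V -> bool}) := [ffun u => x (comp u) == tau u].
set T := \sum_(e | _) _.
set N := #|{: {ffun V -> bool}}|.
have hN : (0 < N)%N by apply/card_gt0P; exists [ffun=> true].
have key : \sum_(x : {ffun V -> bool}) energy c d (S x) = N%:R * T.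
  rewrite /energy big_split /= exchange_big /=.
  rewrite [X in _ + X](_ : _ = 0) ?addr0; last first.
    rewrite exchange_big /=; apply: big1 => u _.
    under eq_bigr do rewrite ffunE spin_eq mulrA.
    by rewrite -big_distrl /= -big_distrr /= sum_spin1 mulr0 mul0r.
  rewrite /T big_mkcondr mulr_sumr; apply: eq_bigr => e _.
  under eq_bigr do rewrite !ffunE !spin_eq rearr.
  rewrite -big_distrr /=.
  case: eqP => [-> | /eqP ne].
    under eq_bigr do rewrite spin_sq.
    by rewrite sumr_const mulrC.
  by rewrite sum_spin2 // mulr0 mulr0.
have h3 : \sum_(x : {ffun V -> bool}) Hstar c d = N%:R * Hstar c d.
  by rewrite sumr_const mulr_natl.
rewrite -(@ler_pM2l _ N%:R) ?ltr0n // -h3 -key; apply: ler_sum => x _; exact: bigmin_le.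
Qed.

End Comb.

Section Comb2.
Variable r : nat.
Notation V := (cvert r).

Lemma edge_neq (u v : V) : chimera_edge u v -> u != v.
Proof.
move=> he; apply/eqP => uv; move: he; rewrite -uv /chimera_edge.
by case: (cv_l u); rewrite /= ?(ltn_eqF (ltnSn _)) ?andbF.
Qed.

Lemma matching (c : V -> V -> R) (d : V -> R) (comp : V -> V) :
  (forall u v, chimera_edge u v -> comp u = comp v -> comp u = u) ->
  Hstar c d <= - \sum_(e : V * V | chimera_edge e.1 e.2 && (comp e.1 == comp e.2))
                  `|c e.1 e.2|.
Proof.
move=> hc.
apply: (le_trans (@avg r c d comp (fun v => (comp v != v) && (0 < c (comp v) v)))).
rewrite -sumrN le_eqVlt; apply/orP; left; apply/eqP; apply: eq_bigr.
move=> [u v] /andP [/= he /eqP hcuv].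
have hu := hc u v he hcuv.
have nuv := @edge_neq u v he.
have hv : comp v = u by rewrite -hcuv.
rewrite hu hv eqxx nuv /= /spin.
case: (ltrP 0 (c u v)) => h.
  by rewrite gtr0_norm // mulr1 mulrN1.
by rewrite ler0_norm // mulrN1 mulrN mulr1 opprK.
Qed.

End Comb2.

Section Comb3.
Variable r : nat.
Notation V := (cvert r).

Definition oprev (i : 'I_r) : 'I_r := Ordinal (leq_ltn_trans (leq_pred i) (ltn_ord i)).

Definition compA (s : 'I_4) (u : V) : V :=
  let: (i, j, k, l) := u in if l then (i, j, k - s, false) else u.
Definition compB (p : bool) (u : V) : V :=
  let: (i, j, k, l) := u in
  if ~~ l && (odd i != p) && (0 < i)%N then (oprev i, j, k, false) else u.
Definition compC (p : bool) (u : V) : V :=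
  let: (i, j, k, l) := u in
  if l && (odd j != p) && (0 < j)%N then (i, oprev j, k, true) else u.

Lemma propA s u v : chimera_edge u v -> compA s u = compA s v -> compA s u = u.
Proof.
move: u v => [[[i j] k] [|]] [[[i' j'] k'] l'] //=.
rewrite /chimera_edge /cv_i /cv_j /cv_k /cv_l /=.
case: l' => //=; rewrite ?andbF ?orbF.
move=> /and3P [_ /eqP hj _] [_ ej _]; move: hj; rewrite ej; lia.
Qed.

Lemma propB p u v : chimera_edge u v -> compB p u = compB p v -> compB p u = u.
Proof.
move: u v => [[[i j] k] l] [[[i' j'] k'] l'] /=.
rewrite /chimera_edge /cv_i /cv_j /cv_k /cv_l /=.
case: l => //=.
case: ifP => // /andP [hp hi0].
case: l' => /=; first by move=> _ [].
rewrite ?andbF ?orbF /= => /and3P [hi' _ _].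
have hodd : (odd i' != p) = false.
  by rewrite (eqP hi') /=; move: hp; case: (odd i); case: p.
rewrite hodd /= => -[e1 _ _]; have := congr1 val e1; rewrite /= (eqP hi'); lia.
Qed.

Lemma propC p u v : chimera_edge u v -> compC p u = compC p v -> compC p u = u.
Proof.
move: u v => [[[i j] k] l] [[[i' j'] k'] l'] /=.
rewrite /chimera_edge /cv_i /cv_j /cv_k /cv_l /=.
case: l => //=.
case: ifP => // /andP [hp hj0].
case: l' => /=; last by rewrite ?andbF.
rewrite ?andbF ?orbF /= => /and3P [_ hj' _].
have hodd : (odd j' != p) = false.
  by rewrite (eqP hj') /=; move: hp; case: (odd j); case: p.
rewrite hodd /= => -[_ e1 _]; have := congr1 val e1; rewrite /= (eqP hj'); lia.
Qed.

Definition M := ('I_4 + bool + bool)%type.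

Definition compM (m : M) : V -> V :=
  match m with
  | inl (inl s) => compA s
  | inl (inr p) => compB p
  | inr p => compC p
  end.

Lemma propM m u v : chimera_edge u v -> compM m u = compM m v -> compM m u = u.
Proof. case: m => [[s|p]|p] /=; [exact: propA | exact: propB | exact: propC]. Qed.

Lemma cover u v : chimera_edge u v -> exists m : M, compM m u = compM m v.
Proof.
move: u v => [[[i j] k] l] [[[i' j'] k'] l'].
rewrite /chimera_edge /cv_i /cv_j /cv_k /cv_l /=.
case: l; case: l' => /=; rewrite ?andbF ?orbF ?andbT //=.
- move=> /and3P [/eqP hi /eqP hj /eqP hk]; exists (inr (odd j)) => /=.
  rewrite eqxx /= hj /=.
  have -> : (~~ odd j != odd j) = true by case: (odd j).
  by congr (_,_,_,_); apply: val_inj => /=; lia.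
- move=> /andP [/eqP hi /eqP hj]; exists (inl (inl (k' - k))) => /=.
  congr (_,_,_,_); try (apply: val_inj => /=; lia).
  by rewrite opprB addrC subrK.
- move=> /and3P [/eqP hi /eqP hj /eqP hk]; exists (inl (inr (odd i))) => /=.
  rewrite eqxx /= hi /=.
  have -> : (~~ odd i != odd i) = true by case: (odd i).
  by congr (_,_,_,_); apply: val_inj => /=; lia.
Qed.

End Comb3.

Section Final.
Variable r : nat.
Notation V := (cvert r).

Lemma quad_bound (c : V -> V -> R) (d : V -> R) :
  8 * Hstar c d <= - \sum_(e : V * V | chimera_edge e.1 e.2) `|c e.1 e.2|.
Proof.
pose X (m : M) := \sum_(e : V * V | chimera_edge e.1 e.2 && (@compM r m e.1 == @compM r m e.2))
                  `|c e.1 e.2|.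
have hm : forall m : M, Hstar c d <= - X m.
  by move=> m; apply: (@matching r); exact: (@propM r m).
have hB : \sum_(e : V * V | chimera_edge e.1 e.2) `|c e.1 e.2| <= \sum_(m : M) X m.
  have eX : forall m, X m = \sum_(e : V * V | chimera_edge e.1 e.2)
     (if @compM r m e.1 == @compM r m e.2 then `|c e.1 e.2| else 0).
    by move=> m; rewrite /X big_mkcondr.
  rewrite [X in _ <= X](eq_bigr _ (fun m _ => eX m)).
  rewrite exchange_big /=; apply: ler_sum => -[u v] /= he.
  have [m hmuv] := @cover r u v he.
  rewrite (bigD1 m) //= hmuv eqxx lerDl; apply: sumr_ge0 => m' _.
  by case: ifP => _ //; exact: normr_ge0.
have h8 : \sum_(m : M) Hstar c d = 8 * Hstar c d.
  have hc : #|{: M}| = 8%N by rewrite !card_sum card_ord card_bool.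
  by rewrite sumr_const -[#|_|]/#|{: M}| hc mulr_natl.
rewrite -h8 -lerN2 opprK; apply: (le_trans hB).
rewrite -lerN2 opprK -sumrN; apply: ler_sum => m _; exact: hm.
Qed.

Lemma lin_bound (c : V -> V -> R) (d : V -> R) :
  Hstar c d <= \sum_(e : V * V | chimera_edge e.1 e.2) `|c e.1 e.2|
               - \sum_(u : V) `|d u|.
Proof.
apply: (@le_trans _ _ (energy c d [ffun u => d u < 0])); first exact: bigmin_le.
rewrite /energy; apply: lerD.
  apply: ler_sum => e _; rewrite !ffunE.
  apply: (le_trans (ler_norm _)).
  by rewrite !normrM; case: (_ < 0); case: (_ < 0); rewrite /spin ?normrN normr1 !mulr1.
rewrite -sumrN le_eqVlt; apply/orP; left; apply/eqP; apply: eq_bigr => u _.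
rewrite ffunE /spin; case: ltrP => h.
  by rewrite ltr0_norm // opprK mulr1.
by rewrite ger0_norm // mulrN1.
Qed.

End Final.

Theorem theorem2 :
  exists C : R,
    ln (1 + sqrt 2) / PI < C /\
    (3 * C + 4) / C < 1726%:R / 100%:R /\
    forall (r : nat), (0 < r)%N ->
    forall (c : cvert r -> cvert r -> R) (d : cvert r -> R),
      Hstar c d <= - (C / (3 * C + 4)) * coef_l1 c d.
Proof.
exists (2 / 7); split; first exact: num_mc.
split; first exact: const_ok.
move=> r _ c d; rewrite /coef_l1.
apply: combine; [exact: quad_bound | exact: lin_bound].
Qed.
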